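(* For every type vector $\kappa$: (1) If $\mathbb{E}[f(x)]<c$, then $G_{IC}(\kappa)=G^*_{IC}(\kappa)=\{\varnothing\}$. (2) If $\mathbb{E}[f(x)]\ge c$, then $G_{IC}(\kappa)\supseteq G_C(\kappa)$ and $G^*_{IC}(\kappa)\supseteq G^*_C(\kappa)$.
   Context: Model. There are $N\ge 2$ agents $I=\{1,\dots,N\}$. Each agent $i$ has a private type $k_i\in X$; types are drawn i.i.d. from a prior distribution $H$ on $X$, and $\kappa=(k_1,\dots,k_N)$ is the type vector. There is a function $f:X\to\mathbb{R}_{>0}$, a link cost $c>0$ and a decay factor $\delta\in(0,1)$; $\mathbb{E}[f(x)]=\int_X f\,dH$ is assumed well defined. A network ${\bf g}$ is a set of unordered pairs $ij$ ($i\neq j$), called links. Agents $i,j$ are connected in ${\bf g}$ if there is a path of links between them; $d_{ij}$ is the length of a shortest such path ($\infty$ if not connected); $C_i$ denotes the component of ${\bf g}$ containing $i$. Agent $i$'s payoff is $u_i({\bf g})=\sum_{j\neq i,\ j\text{ connected to }i}\delta^{d_{ij}-1}f(k_j)-c\cdot\#\{j: ij\in{\bf g}\}$. Dynamics. The network is empty at $t=0$. In each period $t\ge1$ one unordered pair $(i,j)$ is selected; the sequence of selected pairs up to $t$ is the selection path $\gamma(t)$. The selected agents observe each other's components and simultaneously choose $a_{ij},a_{ji}\in\{0,1\}$ (1 = agree to form the link if absent / keep it if present, 0 = refuse / sever); after the period the link $ij$ is present iff $a_{ij}=a_{ji}=1$. Agents are myopic and play the stable optimistic equilibrium (SOE):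 agent $i$ chooses $1$ iff his expected current payoff (w.r.t. his belief) from the network resulting with the link $ij$ is at least his current payoff without it. Information. Under complete information every agent knows $\kappa$. Under incomplete information (simple updating rule), if $i$ and $j$ have ever been connected at some period so far, each knows the other's type; otherwise each one's belief about the other's type is the prior $H$. Emergence and stability. Given a selection path $\gamma(t)$, the resulting network ${\bf g}(\gamma(t))$ and beliefs $B(\gamma(t))$ are uniquely determined. A network ${\bf g}$ can emerge if ${\bf g}={\bf g}(\gamma(t))$ for some selection path $\gamma(t)$. A pair $({\bf g},B)$ is stable if no link is formed or severed along any subsequent selection path. The process can converge to ${\bf g}$ if for some selection path $\gamma(t)$, ${\bf g}={\bf g}(\gamma(t))$ and $({\bf g}(\gamma(t)),B(\gamma(t)))$ is stable. $G_C(\kappa)$ (resp. $G_{IC}(\kappa)$) is the set of networks that can emerge under complete (resp. incomplete) information, and $G^*_C(\kappa)$ (resp. $G^*_{IC}(\kappa)$) the set of networks to which the process can converge under complete (resp. incomplete) information. *)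

(* Defs.v *)
From HB Require Import structures.
From mathcomp Require Import all_boot all_order all_algebra.
Set Implicit Arguments. Unset Strict Implicit. Unset Printing Implicit Defensive.
Import Order.TTheory GRing.Theory Num.Theory.
Local Open Scope ring_scope.

(* A network on agents 'I_N: a set of ordered pairs; a link ij is stored as
   both (i,j) and (j,i).  All networks arising from the dynamics are
   symmetric and irreflexive. The empty network is set0. *)
Definition network (N : nat) := {set 'I_N * 'I_N}.

Fixpoint reach (N : nat) (g : network N) (k : nat) (i j : 'I_N) : bool :=
  match k with
  | 0 => i == j
  | k'.+1 => reach g k' i j || [exists m, reach g k' i m && ((m, j) \in g)]
  end.

(* i and j connected (paths of length <= N suffice among N agents) *)
Definition connected (N : nat) (g : network N) (i j : 'I_N) : bool :=
  reach g N i j.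

Definition dist (N : nat) (g : network N) (i j : 'I_N) : nat :=
  find (fun k => reach g k i j) (iota 0 N.+1).

Definition degree (N : nat) (g : network N) (i : 'I_N) : nat :=
  #|[set j | (i, j) \in g]|.

(* payoff of agent i in g, when agent i values agent j at v j
   (v j = f(k_j) if known, its expectation E[f] under the prior otherwise;
   payoffs are linear in the f(k_j), so expected payoff = this) *)
Definition payoff (R : realFieldType) (N : nat) (delta c : R)
    (g : network N) (v : 'I_N -> R) (i : 'I_N) : R :=
  \sum_(j : 'I_N | (j != i) && connected g i j) delta ^+ (dist g i j).-1 * v j
  - c * (degree g i)%:R.

Definition add_link (N : nat) (g : network N) (i j : 'I_N) : network N :=
  g :|: [set (i, j); (j, i)].
Definition del_link (N : nat) (g : network N) (i j : 'I_N) : network N :=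
  g :\: [set (i, j); (j, i)].

(* state = (network, set of pairs (i,j) such that i knows j's type, i.e.
   i and j have been connected at some period so far) *)
Definition state (N : nat) := (network N * {set 'I_N * 'I_N})%type.

Definition init_state (N : nat) : state N := (set0, set0).

Definition valuation (R : realFieldType) (X : Type) (N : nat) (ci : bool)
    (f : X -> R) (Ef : R) (kappa : 'I_N -> X) (know : {set 'I_N * 'I_N})
    (i : 'I_N) : 'I_N -> R :=
  fun j => if ci || ((i, j) \in know) then f (kappa j) else Ef.

Definition agrees (R : realFieldType) (X : Type) (N : nat) (ci : bool)
    (f : X -> R) (Ef c delta : R) (kappa : 'I_N -> X) (st : state N)
    (i j : 'I_N) : bool :=
  let v := valuation ci f Ef kappa st.2 i in
  payoff delta c (del_link st.1 i j) v i <= payoff delta c (add_link st.1 i j) v i.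

Definition step (R : realFieldType) (X : Type) (N : nat) (ci : bool)
    (f : X -> R) (Ef c delta : R) (kappa : 'I_N -> X) (st : state N)
    (p : 'I_N * 'I_N) : state N :=
  let i := p.1 in let j := p.2 in
  let g' := if agrees ci f Ef c delta kappa st i j && agrees ci f Ef c delta kappa st j i
            then add_link st.1 i j else del_link st.1 i j in
  (g', st.2 :|: [set q | connected g' q.1 q.2]).

Definition run_from (R : realFieldType) (X : Type) (N : nat) (ci : bool)
    (f : X -> R) (Ef c delta : R) (kappa : 'I_N -> X) (st : state N)
    (s : seq ('I_N * 'I_N)) : state N :=
  foldl (step ci f Ef c delta kappa) st s.

Definition valid_path (N : nat) (s : seq ('I_N * 'I_N)) : bool :=
  all (fun p => p.1 != p.2) s.

Definition stable (R : realFieldType) (X : Type) (N : nat) (ci : bool)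
    (f : X -> R) (Ef c delta : R) (kappa : 'I_N -> X) (st : state N) : Prop :=
  forall s, valid_path s -> (run_from ci f Ef c delta kappa st s).1 = st.1.

(* G_C (ci = true) / G_IC (ci = false): networks that can emerge *)
Definition can_emerge (R : realFieldType) (X : Type) (N : nat) (ci : bool)
    (f : X -> R) (Ef c delta : R) (kappa : 'I_N -> X) (g : network N) : Prop :=
  exists s, valid_path s /\ (run_from ci f Ef c delta kappa (init_state N) s).1 = g.

(* G*_C / G*_IC: networks to which the process can converge *)
Definition can_converge (R : realFieldType) (X : Type) (N : nat) (ci : bool)
    (f : X -> R) (Ef c delta : R) (kappa : 'I_N -> X) (g : network N) : Prop :=
  exists s, valid_path s /\
    let st := run_from ci f Ef c delta kappa (init_state N) s in
    st.1 = g /\ stable ci f Ef c delta kappa st.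

(* Main.v *)
Require Import Defs.
From HB Require Import structures.
From mathcomp Require Import all_boot all_order all_algebra.
Set Implicit Arguments. Unset Strict Implicit. Unset Printing Implicit Defensive.
Import Order.TTheory GRing.Theory Num.Theory.
From mathcomp Require Import lra zify.

Section Graph.
Variable N : nat.
Implicit Types (g : network N) (i j m : 'I_N).

Definition E g : rel 'I_N := fun x y => (x, y) \in g.

Lemma reach_S g k i j : reach g k i j -> reach g k.+1 i j.
Proof. by move=> h /=; rewrite h. Qed.

Lemma reach_mono_k g k k' i j : (k <= k')%N -> reach g k i j -> reach g k' i j.
Proof.
move=> /subnK <-; elim: (k' - k)%N => [|d IH] //= h.
by rewrite IH.
Qed.

Lemma reach_connect g k i j : reach g k i j -> connect (E g) i j.
Proof.
elim: k j => [|k IH] j /=; first by move/eqP->; exact: connect0.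
case/orP=> [/IH //|/existsP[x /andP[hx hxj]]].
by apply: connect_trans (IH _ hx) (connect1 _).
Qed.

Lemma path_reach g i p : path (E g) i p -> reach g (size p) i (last i p).
Proof.
elim/last_ind: p => [|p x IH] /=; first by [].
rewrite rcons_path last_rcons size_rcons => /andP[hp he] /=.
apply/orP; right; apply/existsP; exists (last i p); by rewrite IH.
Qed.

Lemma connectedE g i j : connected g i j = connect (E g) i j.
Proof.
apply/idP/idP; first exact: reach_connect.
case/connectP=> p hp ->.
case: (shortenP hp) => p' hp' hu _.
have hs : (size p' <= N)%N.
  have /card_uniqP h := hu; have := max_card (mem (i :: p')); rewrite h card_ord /= => /ltnW //.
exact: reach_mono_k hs (path_reach hp').
Qed.

Definition symg g := forall x y, ((x, y) \in g) = ((y, x) \in g).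

Lemma connected_sym g i j : symg g -> connected g i j = connected g j i.
Proof.
move=> hs; rewrite !connectedE; apply: sym_connect_sym => x y; exact: hs.
Qed.

Lemma connected_trans g i j m : connected g i j -> connected g j m -> connected g i m.
Proof. rewrite !connectedE; exact: connect_trans. Qed.

Lemma connected_refl g i : connected g i i.
Proof. by rewrite connectedE connect0. Qed.

Lemma connected_edge g i j : (i, j) \in g -> connected g i j.
Proof. by move=> h; rewrite connectedE connect1. Qed.

Lemma reach_sub g g' k i j : {subset g <= g'} -> reach g k i j -> reach g' k i j.
Proof.
move=> sg; elim: k j => [|k IH] j //=.
case/orP=> [/IH -> //|/existsP[x /andP[hx hxj]]].
apply/orP; right; apply/existsP; exists x; by rewrite IH // sg.
Qed.

Lemma connected_sub g g' i j : {subset g <= g'} -> connected g i j -> connected g' i j.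
Proof. exact: reach_sub. Qed.

Lemma reach0 k i j : reach (set0 : network N) k i j = (i == j).
Proof.
elim: k j => [|k IH] j //=; rewrite IH.
case: eqP => //= _; apply/negbTE/existsP => -[x]; by rewrite in_set0 andbF.
Qed.

Lemma find_mono (P1 P2 : pred nat) s :
  (forall k, P1 k -> P2 k) -> (find P2 s <= find P1 s)%N.
Proof.
move=> h; elim: s => //= x s IH.
case: (boolP (P1 x)) => [/h -> //| _]; by case: (P2 x).
Qed.

Lemma dist_sub g g' i j : {subset g <= g'} -> (dist g' i j <= dist g i j)%N.
Proof. move=> sg; apply: find_mono => k; exact: reach_sub. Qed.

Lemma add_link_sym g i j : symg g -> symg (add_link g i j).
Proof.
move=> hs x y; rewrite /add_link !inE !xpair_eqE hs.
by case: (x == i); case: (x == j); case: (y == i); case: (y == j); rewrite /= ?orbT ?orbF.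
Qed.

Lemma del_link_sym g i j : symg g -> symg (del_link g i j).
Proof.
move=> hs x y; rewrite /del_link !inE !xpair_eqE hs.
by case: (x == i); case: (x == j); case: (y == i); case: (y == j); rewrite /= ?orbT ?orbF.
Qed.

Lemma del_sub_add g i j : {subset del_link g i j <= add_link g i j}.
Proof. by move=> x; rewrite !inE => /andP[_ ->]. Qed.

End Graph.

Section Pay.
Local Open Scope ring_scope.
Variable R : realFieldType.
Variables (N : nat) (delta c : R).
Hypothesis hd0 : 0 <= delta.
Hypothesis hd1 : delta <= 1.
Implicit Types (g : network N) (i j m : 'I_N).

Definition alpha g i m : R :=
  if (m != i) && connected g i m then delta ^+ (dist g i m).-1 else 0.

Lemma alpha_ge0 g i m : 0 <= alpha g i m.
Proof. rewrite /alpha; case: ifP => // _; exact: exprn_ge0. Qed.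

Lemma alpha_le1 g i m : alpha g i m <= 1.
Proof. rewrite /alpha; case: ifP => // _; exact: exprn_ile1. Qed.

Lemma payoffE g v i :
  payoff delta c g v i = \sum_m alpha g i m * v m - c * (degree g i)%:R.
Proof.
rewrite /payoff big_mkcond /=; congr (_ - _); apply: eq_bigr => m _.
by rewrite /alpha; case: ifP; rewrite ?mul0r.
Qed.

Lemma degree_add_del g i j : i != j ->
  degree (add_link g i j) i = (degree (del_link g i j) i).+1.
Proof.
move=> hij; rewrite /degree.
have -> : [set m | (i, m) \in add_link g i j] = j |: [set m | (i, m) \in del_link g i j].
  apply/setP => m; rewrite !inE !xpair_eqE eqxx /= (negbTE hij) /=.
  by case: (m == j); case: (m == i); rewrite /= ?andbT ?andbF ?orbT ?orbF.
by rewrite cardsU1 !inE !xpair_eqE !eqxx.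
Qed.

Definition Dval g i j (v : 'I_N -> R) :=
  \sum_m (alpha (add_link g i j) i m - alpha (del_link g i j) i m) * v m - c.

Lemma DvalE g i j v : i != j ->
  payoff delta c (add_link g i j) v i - payoff delta c (del_link g i j) v i = Dval g i j v.
Proof.
move=> hij; rewrite !payoffE degree_add_del // /Dval.
rewrite -natr1.
under [X in _ = X - _]eq_bigr => m _ do rewrite mulrBl.
rewrite sumrB; set A := \sum_m _; set B := \sum_m _; set d := (degree _ _)%:R.
rewrite /=; lra.
Qed.


Lemma alpha_mono g i j m : alpha (del_link g i j) i m <= alpha (add_link g i j) i m.
Proof.
rewrite /alpha; case: ifP => [/andP[hm hc]|_]; last by case: ifP => // _; exact: exprn_ge0.
rewrite hm (connected_sub (@del_sub_add _ g i j) hc) /=.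
apply: ler_wiXn2l => //; rewrite -!subn1 leq_sub2r //.
exact: dist_sub (@del_sub_add _ g i j).
Qed.

Lemma alpha_bridge g i j : i != j -> ~~ connected (del_link g i j) i j ->
  alpha (add_link g i j) i j = 1.
Proof.
move=> hij _; rewrite /alpha eq_sym hij /=.
have he : (i, j) \in add_link g i j by rewrite /add_link !inE eqxx orbT.
rewrite connected_edge //.
have -> : dist (add_link g i j) i j = 1%N.
  have hN : (0 < N)%N by apply: leq_ltn_trans (leq0n i) (ltn_ord i).
  rewrite /dist.
  have -> : iota 0 N.+1 = [:: 0, 1 & iota 2 N.-1]%N by rewrite -(prednK hN).
  rewrite /= (negbTE hij) /=.
  suff -> : [exists m, (i == m) && ((m, j) \in add_link g i j)] by [].
  by apply/existsP; exists i; rewrite eqxx.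
by rewrite expr0.
Qed.

Lemma alpha_out g i j m : ~~ connected (add_link g i j) i m ->
  alpha (add_link g i j) i m = 0 /\ alpha (del_link g i j) i m = 0.
Proof.
move=> hc; rewrite /alpha (negbTE hc) andbF; split => //.
case: ifP => // /andP[_ h]; move: hc; by rewrite (connected_sub (@del_sub_add _ g i j) h).
Qed.

Lemma reach_iso g i j k m : (forall x, (j, x) \notin g) -> m != j ->
  reach (add_link g i j) k i m -> reach (del_link g i j) k i m.
Proof.
move=> hiso; elim: k m => [|k IH] m hm //=.
case/orP => [/IH -> //|/existsP[x /andP[hx he]]].
move: he; rewrite !inE !xpair_eqE (negbTE hm) andbF /=.
case/orP => [he|/andP[/eqP ex /eqP em]].
- have hxj : x != j by apply: contraNneq (hiso m) => <-.
  apply/orP; right; apply/existsP; exists x.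
  rewrite IH // /= !inE he !xpair_eqE (negbTE hm) andbF /=.
  by rewrite (negbTE hxj).
- subst; apply/orP; left.
  by apply: (reach_mono_k (leq0n k)); rewrite /= eqxx.
Qed.

Lemma alpha_iso g i j m : (forall x, (j, x) \notin g) -> m != j ->
  alpha (add_link g i j) i m = alpha (del_link g i j) i m.
Proof.
move=> hiso hm.
have hr : forall k, reach (add_link g i j) k i m = reach (del_link g i j) k i m.
  move=> k; apply/idP/idP; first exact: reach_iso.
  exact: reach_sub (@del_sub_add _ g i j).
rewrite /alpha /connected /dist hr.
by rewrite (eq_find (a2 := fun k => reach (del_link g i j) k i m)).
Qed.


Lemma Dval_lb g i j v : i != j -> ~~ connected (del_link g i j) i j ->
  (forall m, 0 <= v m) -> v j - c <= Dval g i j v.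
Proof.
move=> hij hc hv; rewrite /Dval lerD2r (bigD1 j) //= alpha_bridge //.
have -> : alpha (del_link g i j) i j = 0 by rewrite /alpha (negbTE hc) andbF.
rewrite subr0 mul1r lerDl; apply: sumr_ge0 => m _; apply: mulr_ge0 => //.
by rewrite subr_ge0 alpha_mono.
Qed.

Lemma Dval_ub_iso g i j v : (forall x, (j, x) \notin g) ->
  (forall m, 0 <= v m) -> Dval g i j v <= v j - c.
Proof.
move=> hiso hv; rewrite /Dval lerD2r (bigD1 j) //= big1 ?addr0.
  rewrite -[leRHS]mul1r; apply: ler_wpM2r => //.
  have := alpha_le1 (add_link g i j) i j; have := alpha_ge0 (del_link g i j) i j.
  lra.
by move=> m hm; rewrite alpha_iso // subrr mul0r.
Qed.

Lemma Dval_ext g i j v1 v2 :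
  (forall m, m != i -> connected (add_link g i j) i m -> v1 m = v2 m) ->
  Dval g i j v1 = Dval g i j v2.
Proof.
move=> h; rewrite /Dval; congr (_ - _); apply: eq_bigr => m _.
case: (boolP (m == i)) => [/eqP ->|hm].
  by rewrite /alpha !eqxx /= subrr !mul0r.
case: (boolP (connected (add_link g i j) i m)) => [hc|hc]; first by rewrite h.
by case: (alpha_out hc) => -> ->; rewrite subrr !mul0r.
Qed.

Lemma add_add g i j : add_link (add_link g i j) i j = add_link g i j.
Proof. by rewrite /add_link -setUA setUid. Qed.
Lemma del_add g i j : del_link (add_link g i j) i j = del_link g i j.
Proof. by rewrite /del_link /add_link setDUl setDv setU0. Qed.

Lemma Dval_add g i j v : Dval (add_link g i j) i j v = Dval g i j v.
Proof. by rewrite /Dval add_add del_add. Qed.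

End Pay.

Lemma del_sub (N : nat) (g : network N) i j : {subset del_link g i j <= g}.
Proof. by move=> x; rewrite !inE => /andP[_ ->]. Qed.

Lemma conn_add_same (N : nat) (g : network N) i j a m : symg g -> connected g i j ->
  connected (add_link g i j) a m -> connected g a m.
Proof.
move=> hs hij; rewrite !connectedE; apply: connect_sub a m => x y.
rewrite /E /add_link !inE !xpair_eqE => /orP[h|/orP[/andP[/eqP-> /eqP->]|/andP[/eqP-> /eqP->]]].
- exact: connect1.
- by rewrite -connectedE.
- by rewrite -connectedE connected_sym.
Qed.

Lemma conn_del_same (N : nat) (g : network N) i j a m : symg g ->
  connected (del_link g i j) i j -> connected g a m -> connected (del_link g i j) a m.
Proof.
move=> hs hij; rewrite !connectedE; apply: connect_sub a m => x y hxy.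
case: (boolP ((x, y) \in [set (i, j); (j, i)])) => hin.
  move: hin; rewrite !inE !xpair_eqE => /orP[/andP[/eqP-> /eqP->]|/andP[/eqP-> /eqP->]].
  - by rewrite -connectedE.
  - by rewrite -connectedE connected_sym //; apply: del_link_sym.
apply: connect1; rewrite /E /del_link inE hin /=; exact: hxy.
Qed.


Lemma del_link_id (N : nat) (g : network N) i j : (i, j) \notin g -> (j, i) \notin g ->
  del_link g i j = g.
Proof.
move=> h1 h2; apply/setP => x; rewrite !inE.
case: (boolP (x \in g)) => hx; rewrite ?andbF ?andbT //.
apply/negP => /orP[/eqP e|/eqP e]; subst; by rewrite hx in h1 h2.
Qed.

Lemma add_link_C (N : nat) (g : network N) i j : add_link g j i = add_link g i j.
Proof. by rewrite /add_link setUC [in RHS]setUC; congr (_ :|: _); rewrite setUC. Qed.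

Lemma del_link_C (N : nat) (g : network N) i j : del_link g j i = del_link g i j.
Proof. by rewrite /del_link setUC. Qed.

Lemma sub_add (N : nat) (g : network N) i j : {subset g <= add_link g i j}.
Proof. by move=> x; rewrite !inE => ->. Qed.

Section Dyn.
Local Open Scope ring_scope.
Variables (R : realFieldType) (X : Type) (N : nat) (f : X -> R) (Ef c delta : R).
Variable (kappa : 'I_N -> X).
Hypotheses (hf : forall x, 0 < f x) (hEf : 0 < Ef) (hc : 0 < c).
Hypotheses (hd0 : 0 <= delta) (hd1 : delta <= 1).
Implicit Types (g : network N) (K : {set 'I_N * 'I_N}) (i j a m : 'I_N).

Notation F := (fun m => f (kappa m)).
Notation stepb ci := (step ci f Ef c delta kappa).
Notation agr ci := (agrees ci f Ef c delta kappa).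
Notation val ci := (valuation ci f Ef kappa).

Lemma val_ge0 ci K i m : 0 <= val ci K i m.
Proof. by rewrite /valuation; case: ifP => _; apply: ltW. Qed.

Lemma F_ge0 m : 0 <= F m.
Proof. exact: ltW. Qed.

Lemma agreesE ci st i j : i != j ->
  agr ci st i j = (0 <= Dval delta c st.1 i j (val ci st.2 i)).
Proof. by move=> hij; rewrite /agrees -DvalE // subr_ge0. Qed.

Lemma agrC_irrel g K K' i j : agr true (g, K) i j = agr true (g, K') i j.
Proof. by []. Qed.

Definition bC g i j := agr true (g, set0) i j && agr true (g, set0) j i.

Definition netC g (p : 'I_N * 'I_N) :=
  if bC g p.1 p.2 then add_link g p.1 p.2 else del_link g p.1 p.2.

Lemma stepC_net st p : (stepb true st p).1 = netC st.1 p.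
Proof. by case: st => g K. Qed.

Definition INVC g := symg g /\ forall a b, (a, b) \in g -> c <= F a.

Lemma key_good g K i j : INVC g -> i != j -> agr true (g, K) i j -> c <= F j.
Proof.
move=> [hs hg] hij; rewrite agreesE //= => hD.
case: (boolP [exists x, (j, x) \in g]) => [/existsP[x hx]|hno].
  exact: hg hx.
have hiso : forall x, (j, x) \notin g.
  by move=> x; apply: contraNN hno => h; apply/existsP; exists x.
have := Dval_ub_iso c hd0 hd1 i hiso F_ge0; lra.
Qed.

Lemma INVC_step g p : p.1 != p.2 -> INVC g -> INVC (netC g p).
Proof.
case: p => i j /= hij [hs hg]; rewrite /netC /bC /=.
case: ifP => [/andP[hi hj]|_]; split.
- exact: add_link_sym.
- move=> a b; rewrite /add_link !inE !xpair_eqE.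
  case/orP=> [/hg //|/orP[/andP[/eqP-> _]|/andP[/eqP-> _]]].
  + have hji : j != i by rewrite eq_sym.
    exact: (key_good (conj hs hg) hji hj).
  + exact: (key_good (conj hs hg) hij hi).
- exact: del_link_sym.
- by move=> a b /del_sub /hg.
Qed.


Definition Rel g K := forall a m, a != m -> ((a, m) \in K) = connected g a m.

Lemma Rel_after g g' K : Rel g K -> (forall a m, connected g a m -> connected g' a m) ->
  Rel g' (K :|: [set q | connected g' q.1 q.2]).
Proof.
move=> hR hcc a m ham; rewrite !inE hR //=.
by case: (boolP (connected g a m)) => [/hcc ->|].
Qed.

Lemma sim_step g K p : c <= Ef -> p.1 != p.2 -> INVC g -> Rel g K ->
  netC g p = g \/
  ((stepb false (g, K) p).1 = netC g p /\ Rel (netC g p) (stepb false (g, K) p).2).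
Proof.
case: p => i j cEf /= hij [hs hg] hR.
have hji : j != i by rewrite eq_sym.
have vI : forall a m, a != m -> connected g a m -> val false K a m = F m.
  by move=> a m ham hcam; rewrite /valuation /= hR // hcam.
set bI := agr false (g, K) i j && agr false (g, K) j i.
suff [hnet | [hb hconn]] : netC g (i, j) = g \/
   (bI = bC g i j /\ (forall a m, connected g a m -> connected (netC g (i, j)) a m)).
- by left.
- right; rewrite /step /= -/bI hb /=; split; first by [].
  exact: Rel_after hR hconn.
case: (boolP (connected g i j)) => hcij.
  have hcji : connected g j i by rewrite connected_sym.
  have eqa : forall a b, a != b -> connected g a b ->
      agr false (g, K) a b = agr true (g, set0) a b.
    move=> a b hab hcab; rewrite !agreesE //=; congr (_ <= _); apply: Dval_ext => m hma hcm.
    apply: vI; first by rewrite eq_sym.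
    exact: conn_add_same hs hcab hcm.
  have hb : bI = bC g i j by rewrite /bI /bC !eqa.
  rewrite /netC /=; case hbC: (bC g i j).
    right; split; first by rewrite hb hbC.
    move=> a m; exact: connected_sub (@sub_add _ g i j).
  case: (boolP ((i, j) \in g)) => hin; last first.
    by left; apply: del_link_id => //; rewrite -hs.
  right; split; first by rewrite hb hbC.
  have hcd : connected (del_link g i j) i j.
    apply/negPn/negP => hnc; move: hbC; rewrite /bC !agreesE //=.
    have hFi : c <= F i by apply: hg hin.
    have hFj : c <= F j by apply: (hg j i); rewrite -hs.
    have h1 := Dval_lb c hd0 hd1 hij hnc F_ge0.
    have hnc' : ~~ connected (del_link g j i) j i.
      by rewrite del_link_C connected_sym //; apply: del_link_sym.
    have h2 := Dval_lb c hd0 hd1 hji hnc' F_ge0.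
    have -> : 0 <= Dval delta c g i j (fun m => f (kappa m)) by lra.
    have -> : 0 <= Dval delta c g j i (fun m => f (kappa m)) by lra.
    by [].
  move=> a m; exact: conn_del_same.
have hnij : (i, j) \notin g by apply: contraNN hcij; apply: connected_edge.
have hnji : (j, i) \notin g by rewrite -hs.
have hbI : bI = true.
  rewrite /bI !agreesE //=.
  have hd1' : ~~ connected (del_link g i j) i j.
    by apply: contraNN hcij; apply: connected_sub; apply: del_sub.
  have hd2' : ~~ connected (del_link g j i) j i.
    rewrite connected_sym; last by apply: del_link_sym.
    by apply: contraNN hcij; apply: connected_sub; apply: del_sub.
  have e1 : val false K i j = Ef by rewrite /valuation /= hR // (negbTE hcij).
  have e2 : val false K j i = Ef.
    by rewrite /valuation /= hR // connected_sym // (negbTE hcij).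
  have h1 := Dval_lb c hd0 hd1 hij hd1' (val_ge0 false K i).
  have h2 := Dval_lb c hd0 hd1 hji hd2' (val_ge0 false K j).
  rewrite e1 in h1; rewrite e2 in h2.
  apply/andP; split; lra.
rewrite /netC /=; case hbC: (bC g i j).
  right; split; first by rewrite hbI.
  move=> a m; exact: connected_sub (@sub_add _ g i j).
by left; apply: del_link_id.
Qed.


Lemma agree_unknown g K i j : c <= Ef -> i != j -> ~~ connected g i j ->
  (i, j) \notin K -> agr false (g, K) i j.
Proof.
move=> cEf hij hcij hK; rewrite agreesE //=.
have hd : ~~ connected (del_link g i j) i j.
  by apply: contraNN hcij; apply: connected_sub; apply: del_sub.
have h1 := Dval_lb c hd0 hd1 hij hd (val_ge0 false K i).
have e1 : val false K i j = Ef by rewrite /valuation /= (negbTE hK).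
rewrite e1 in h1; lra.
Qed.

Definition symK K := forall a b, ((a, b) \in K) = ((b, a) \in K).
Definition connK g K := forall a m, a != m -> connected g a m -> (a, m) \in K.
Definition fullK K := forall a m, a != m -> (a, m) \in K.

Lemma symK_after g K : symg g -> symK K -> symK (K :|: [set q | connected g q.1 q.2]).
Proof. by move=> hs hK a b; rewrite !inE hK /= connected_sym. Qed.

Lemma two_steps g K i j : c <= Ef -> symg g -> netC g (i, j) = g -> i != j ->
  (i, j) \notin K -> connK g K -> symK K ->
  exists K2, run_from false f Ef c delta kappa (g, K) [:: (i, j); (i, j)] = (g, K2) /\
    {subset K <= K2} /\ (i, j) \in K2 /\ connK g K2 /\ symK K2.
Proof.
move=> cEf hs hst hij hK hcK hsK.
have hji : j != i by rewrite eq_sym.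
have hcij : ~~ connected g i j by apply: contraNN hK; apply: hcK.
have hcji : ~~ connected g j i by rewrite connected_sym.
have hjiK : (j, i) \notin K by rewrite -hsK.
have hnij : (i, j) \notin g by apply: contraNN hcij; apply: connected_edge.
have hnji : (j, i) \notin g by rewrite -hs.
set g1 := add_link g i j.
set K1 := K :|: [set q | connected g1 q.1 q.2].
have st1 : stepb false (g, K) (i, j) = (g1, K1).
  by rewrite /step /= !agree_unknown.
have hbC : bC g i j = false.
  apply/negP => hb; move: hst; rewrite /netC /= hb => e.
  by move: hnij; rewrite -{1}e /add_link !inE eqxx orbT.
have hvK1 : forall a m, a != m -> connected g1 a m -> val false K1 a m = F m.
  by move=> a m ham hcm; rewrite /valuation /= !inE hcm orbT.
have hag : forall a b, a != b -> add_link g a b = g1 ->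
    agr false (g1, K1) a b = agr true (g, set0) a b.
  move=> a b hab e; rewrite !agreesE //= -e Dval_add; congr (_ <= _).
  apply: Dval_ext => m hma hcm; apply: hvK1; first by rewrite eq_sym.
  by rewrite -e.
have st2 : stepb false (g1, K1) (i, j) = (g, K1 :|: [set q | connected g q.1 q.2]).
  rewrite /step /= (hag i j hij erefl) (hag j i hji (add_link_C g i j)).
  by move: hbC; rewrite /bC => ->; rewrite /g1 del_add del_link_id.
exists (K1 :|: [set q | connected g q.1 q.2]); split.
  by rewrite /run_from /= st1 st2.
split; first by move=> x hx; rewrite !inE hx.
split; first by rewrite !inE /= connected_edge ?orbT // /g1 /add_link !inE eqxx orbT.
split; first by move=> a m _ h; rewrite !inE h orbT.
apply: symK_after => //; apply: symK_after => //; exact: add_link_sym.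
Qed.


Lemma run_cat ci st s1 s2 : run_from ci f Ef c delta kappa st (s1 ++ s2) =
  run_from ci f Ef c delta kappa (run_from ci f Ef c delta kappa st s1) s2.
Proof. by rewrite /run_from foldl_cat. Qed.

Lemma test_phase g (L : seq ('I_N * 'I_N)) K : c <= Ef -> symg g ->
  (forall p, p.1 != p.2 -> netC g p = g) -> connK g K -> symK K ->
  exists s2 K2, valid_path s2 /\ run_from false f Ef c delta kappa (g, K) s2 = (g, K2) /\
    (forall q, q \in L -> q.1 != q.2 -> q \in K2) /\ connK g K2 /\ symK K2 /\ {subset K <= K2}.
Proof.
move=> cEf hs hst; elim: L K => [|[i j] L IH] K hcK hsK.
  by exists [::], K; do !split.
case: (boolP ((i != j) && ((i, j) \notin K))) => [/andP[hij hK]|hno].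
  have [K1 [e1 [hsub [hin [hcK1 hsK1]]]]] := two_steps cEf hs (hst (i, j) hij) hij hK hcK hsK.
  have [s2 [K2 [hv [e2 [hL [hcK2 [hsK2 hsub2]]]]]]] := IH K1 hcK1 hsK1.
  exists ([:: (i, j); (i, j)] ++ s2), K2; split.
    by move: hv; rewrite /valid_path /= hij.
  split; first by rewrite run_cat e1.
  split; last by split => //; split => // x /hsub /hsub2.
  move=> q; rewrite inE => /orP[/eqP -> _|hq hq']; last exact: hL.
  exact: hsub2.
have [s2 [K2 [hv [e2 [hL [hcK2 [hsK2 hsub2]]]]]]] := IH K hcK hsK.
exists s2, K2; do !split => //.
move=> q; rewrite inE => /orP[/eqP e hq|]; last exact: hL.
subst q; move: hno hq => /=; rewrite negb_and !negbK => /orP[/eqP e hq|hK _].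
  by rewrite e eqxx in hq.
exact: hsub2.
Qed.


Lemma run_rcons ci st s p : run_from ci f Ef c delta kappa st (rcons s p) =
  stepb ci (run_from ci f Ef c delta kappa st s) p.
Proof. by rewrite /run_from foldl_rcons. Qed.

Lemma valid_rcons (s : seq ('I_N * 'I_N)) (p : 'I_N * 'I_N) : valid_path (rcons s p) = valid_path s && (p.1 != p.2).
Proof. by rewrite /valid_path all_rcons andbC. Qed.

Definition runC (s : seq ('I_N * 'I_N)) := run_from true f Ef c delta kappa (init_state N) s.
Definition runI (s : seq ('I_N * 'I_N)) := run_from false f Ef c delta kappa (init_state N) s.

Lemma INVC0 : INVC set0.
Proof. by split => [x y|a b]; rewrite !in_set0. Qed.

Lemma sim_run s : c <= Ef -> valid_path s ->
  INVC (runC s).1 /\ exists s', valid_path s' /\ (runI s').1 = (runC s).1 /\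
    Rel (runC s).1 (runI s').2.
Proof.
move=> cEf; elim/last_ind: s => [|s p IH].
  move=> _; split; first exact: INVC0.
  exists [::]; split => //; split => // a m ham.
  by rewrite /= in_set0 /connected reach0 (negbTE ham).
rewrite valid_rcons => /andP[hv hp].
have [hI [s' [hv' [e' hR]]]] := IH hv.
rewrite /runC run_rcons stepC_net -/(runC s); split; first exact: INVC_step.
have hst : runI s' = ((runC s).1, (runI s').2) by rewrite -e'; case: (runI s').
case: (sim_step cEf hp hI hR) => [-> | [e2 hR2]].
  by exists s'.
exists (rcons s' p); split; first by rewrite valid_rcons hv' hp.
by rewrite /runI run_rcons -/(runI s') hst e2.
Qed.

Lemma step_full g K p : p.1 != p.2 -> fullK K ->
  (stepb false (g, K) p).1 = netC g p /\ fullK (stepb false (g, K) p).2.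
Proof.
case: p => i j /= hij hK.
have hji : j != i by rewrite eq_sym.
have eqa : forall a b, a != b -> agr false (g, K) a b = agr true (g, set0) a b.
  move=> a b hab; rewrite !agreesE //=; congr (_ <= _); apply: Dval_ext => m hma _.
  by rewrite /valuation /= hK // eq_sym.
split; first by rewrite /step /netC /bC /= !eqa.
by move=> a m ham; rewrite /step /= !inE hK.
Qed.

Lemma run_full s g K stC : valid_path s -> fullK K -> stC.1 = g ->
  (run_from false f Ef c delta kappa (g, K) s).1 = (run_from true f Ef c delta kappa stC s).1.
Proof.
elim: s g K stC => [|p s IH] g K stC; first by move=> _ _ <-.
case/andP => hp hv hK hg.
have [e1 hK1] := step_full g hp hK.
rewrite /run_from /= -/(run_from _ _ _ _ _ _ _ s) -/(run_from _ _ _ _ _ _ _ s).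
have -> : stepb false (g, K) p = ((stepb false (g, K) p).1, (stepb false (g, K) p).2).
  by case: (stepb false (g, K) p).
apply: IH => //; by rewrite e1 stepC_net hg.
Qed.

Definition Inv0 (st : state N) := st.1 = set0 /\ forall a m, a != m -> (a, m) \notin st.2.

Lemma step0 st p : Ef < c -> p.1 != p.2 -> Inv0 st -> Inv0 (stepb false st p).
Proof.
case: st => g K; case: p => i j hEc /= hij [/= -> hK].
have hna : agr false (set0, K) i j = false.
  rewrite agreesE //=; apply/negbTE; rewrite -ltNge.
  have hiso : forall x, (j, x) \notin (set0 : network N) by move=> x; rewrite in_set0.
  have := Dval_ub_iso c hd0 hd1 i hiso (val_ge0 false K i).
  have -> : val false K i j = Ef by rewrite /valuation /= (negbTE (hK _ _ hij)).
  lra.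
rewrite /step /= hna /=; split; first by rewrite /del_link set0D.
move=> a m ham; rewrite !inE negb_or hK //= /del_link set0D /connected reach0.
by rewrite (negbTE ham).
Qed.

Lemma run0 s st : Ef < c -> valid_path s -> Inv0 st ->
  Inv0 (run_from false f Ef c delta kappa st s).
Proof.
move=> hEc; elim: s st => [|p s IH] st //= /andP[hp hv] h0.
exact: IH (step0 hEc hp h0).
Qed.

Lemma Inv0_init : Inv0 (init_state N).
Proof. by split => // a m _; rewrite in_set0. Qed.

End Dyn.

Local Open Scope ring_scope.
Theorem theorem1 (R : realFieldType) (X : Type) (N : nat) (f : X -> R)
    (Ef c delta : R) :
  (2 <= N)%N -> (forall x, 0 < f x) -> 0 < Ef -> 0 < c -> 0 < delta -> delta < 1 ->
  forall kappa : 'I_N -> X,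
    (Ef < c ->
       (forall g : network N, can_emerge false f Ef c delta kappa g <-> g = set0) /\
       (forall g : network N, can_converge false f Ef c delta kappa g <-> g = set0)) /\
    (c <= Ef ->
       (forall g : network N,
          can_emerge true f Ef c delta kappa g -> can_emerge false f Ef c delta kappa g) /\
       (forall g : network N,
          can_converge true f Ef c delta kappa g -> can_converge false f Ef c delta kappa g)).
Proof.
move=> hN hf hEf hc hdp hdl kappa.
have hd0 : 0 <= delta by apply: ltW.
have hd1 : delta <= 1 by apply: ltW.
split.
  move=> hEc; split => g; split.
  - case=> s [hv <-]; by case: (run0 kappa hf hEf hd0 hd1 hEc hv (Inv0_init N)).
  - by move=> ->; exists [::].
  - case=> s [hv /= [<- _]]; by case: (run0 kappa hf hEf hd0 hd1 hEc hv (Inv0_init N)).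
  - move=> ->; exists [::]; split => //=; split => // s hv.
    by case: (run0 kappa hf hEf hd0 hd1 hEc hv (Inv0_init N)) => -> _.
move=> cEf; split => g.
  case=> s [hv hg].
  have [_ [s' [hv' [e' _]]]] := sim_run kappa hf hEf hd0 hd1 cEf hv.
  exists s'; split => //; by rewrite /runI /runC in e'; rewrite e'.
case=> s [hv /= [hg hstab]].
have [hI [s' [hv' [e' hR]]]] := sim_run kappa hf hEf hd0 hd1 cEf hv.
rewrite /runC hg in hI hR e'; rewrite /runI in e' hR.
set K := (run_from false f Ef c delta kappa (init_state N) s').2 in hR.
have hst : forall p, p.1 != p.2 -> netC f Ef c delta kappa g p = g.
  move=> p hp; have hvp : valid_path [:: p] by rewrite /valid_path /= hp.
  have : (step true f Ef c delta kappa
     (run_from true f Ef c delta kappa (init_state N) s) p).1 =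
     (run_from true f Ef c delta kappa (init_state N) s).1 := hstab _ hvp.
  by rewrite stepC_net hg.
have hcK : connK g K by move=> a m ham hcm; rewrite hR.
have hsK : symK K.
  move=> a b; case: (eqVneq a b) => [-> //|hab].
  rewrite hR // hR; last by rewrite eq_sym.
  exact: connected_sym (proj1 hI).
have [s2 [K2 [hv2 [e2 [hL [_ [_ _]]]]]]] :=
  test_phase hf hEf hd0 hd1 (enum [set: 'I_N * 'I_N]) cEf (proj1 hI) hst hcK hsK.
have hfull : fullK K2.
  by move=> a m ham; apply: hL => //; rewrite mem_enum inE.
have E2 : run_from false f Ef c delta kappa (init_state N) (s' ++ s2) = (g, K2).
  rewrite run_cat -e2 -e'; congr run_from.
  by rewrite /K; case: (run_from _ _ _ _ _ _ _ _).
exists (s' ++ s2); split; first by move: hv' hv2; rewrite /valid_path all_cat => -> ->.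
rewrite /= E2 /=; split => // s3 hv3.
rewrite (run_full f Ef c delta kappa hv3 hfull hg).
by rewrite hstab.
Qed.
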